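(* Let $d<n$, let $\sigma\in\mathbb R^{d\times n}$ have full rank $d$, $A\in\mathbb R^{n\times n}$ symmetric positive definite, $h>0$, $Z\in\mathbb R^n$, and $\xi\in\mathrm{Im}\,\sigma^{\mathrm{tr}}$. Let $\alpha'>0$ be such that $x^{\mathrm{tr}}A^{-1}x\ge\alpha'|x|^2$ for all $x\in\mathbb R^n$, and assume $|\xi|<h\sqrt{\alpha'}$ and $A^{-1}(\mathrm{Ker}\,\sigma)=\mathrm{Ker}\,\sigma$. Then $\bar\phi:=\Pi(Z)+\big(\Pi^\perp(Z)^{\mathrm{tr}}A^{-1}\Pi^\perp(Z)\big)^{1/2}\big(h^2-\xi^{\mathrm{tr}}A\xi\big)^{-1/2}A\xi$ is the unique minimizer over $\phi\in\mathrm{Im}\,\sigma^{\mathrm{tr}}$ of $F(\phi):=-\xi^{\mathrm{tr}}\phi+h\big((Z-\phi)^{\mathrm{tr}}A^{-1}(Z-\phi)\big)^{1/2}$.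
   Context: $\Pi$ and $\Pi^\perp$ denote the orthogonal projections of $\mathbb R^n$ onto $\mathrm{Im}\,\sigma^{\mathrm{tr}}$ and $\mathrm{Ker}\,\sigma$, respectively. *)

(* Defs.v *)
From mathcomp Require Import all_boot all_order all_algebra.
From mathcomp Require Import classical_sets reals.
Set Implicit Arguments. Unset Strict Implicit. Unset Printing Implicit Defensive.
Import Order.TTheory GRing.Theory Num.Theory.
Local Open Scope ring_scope.
Local Open Scope classical_set_scope.

Definition dotv {R : realType} {n : nat} (x y : 'cV[R]_n) : R := (x^T *m y) 0 0.
Definition normv {R : realType} {n : nat} (x : 'cV[R]_n) : R := Num.sqrt (dotv x x).

Definition qform {R : realType} {n : nat} (M : 'M[R]_n) (x : 'cV[R]_n) : R :=
  (x^T *m M *m x) 0 0.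

Definition imT {R : realType} {d n : nat} (s : 'M[R]_(d, n)) : set 'cV[R]_n :=
  [set x | exists y : 'cV[R]_d, x = s^T *m y].
Definition kerm {R : realType} {d n : nat} (s : 'M[R]_(d, n)) : set 'cV[R]_n :=
  [set x | s *m x = 0].

Definition orthproj {R : realType} {n : nat} (S : set 'cV[R]_n) (z : 'cV[R]_n)
  : 'cV[R]_n :=
  xget 0 [set p | S p /\ forall s, S s -> dotv s (z - p) = 0].

Definition Pi {R : realType} {d n : nat} (s : 'M[R]_(d, n)) := orthproj (imT s).
Definition Piperp {R : realType} {d n : nat} (s : 'M[R]_(d, n)) := orthproj (kerm s).

Definition sym_posdef {R : realType} {n : nat} (A : 'M[R]_n) : Prop :=
  A^T = A /\ forall x : 'cV[R]_n, x != 0 -> 0 < qform A x.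

(* Main.v *)
Require Import Defs.
From mathcomp Require Import all_boot all_order all_algebra.
From mathcomp Require Import classical_sets reals.
From mathcomp Require Import ring lra.
Import Order.TTheory GRing.Theory Num.Theory.
Local Open Scope ring_scope.
Local Open Scope classical_set_scope.
Set Implicit Arguments. Unset Strict Implicit.

Section S.
Variable R : realType.
Variable n : nat.
Implicit Types (M : 'M[R]_n) (x y z : 'cV[R]_n).

Definition bl M x y : R := (x^T *m M *m y) 0 0.

Lemma blE M x y : bl M x y = dotv x (M *m y).
Proof. by rewrite /bl /dotv mulmxA. Qed.

Lemma dot_bl x y : dotv x y = bl 1%:M x y.
Proof. by rewrite blE mul1mx. Qed.

Lemma qform_bl M x : qform M x = bl M x x.
Proof. by []. Qed.

Lemma blDl M x y z : bl M (x + y) z = bl M x z + bl M y z.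
Proof. by rewrite /bl linearD /= !mulmxDl mxE. Qed.
Lemma blDr M x y z : bl M z (x + y) = bl M z x + bl M z y.
Proof. by rewrite /bl !mulmxDr mxE. Qed.
Lemma blZl M a x z : bl M (a *: x) z = a * bl M x z.
Proof. by rewrite /bl linearZ /= -!scalemxAl mxE. Qed.
Lemma blZr M a x z : bl M z (a *: x) = a * bl M z x.
Proof. by rewrite /bl -!scalemxAr mxE. Qed.
Lemma blNl M x z : bl M (- x) z = - bl M x z.
Proof. by rewrite -scaleN1r blZl mulN1r. Qed.
Lemma blNr M x z : bl M z (- x) = - bl M z x.
Proof. by rewrite -scaleN1r blZr mulN1r. Qed.
Lemma blBl M x y z : bl M (x - y) z = bl M x z - bl M y z.
Proof. by rewrite blDl blNl. Qed.
Lemma blBr M x y z : bl M z (x - y) = bl M z x - bl M z y.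
Proof. by rewrite blDr blNr. Qed.
Lemma bl0l M z : bl M 0 z = 0.
Proof. by rewrite -(scale0r (0 : 'cV[R]_n)) blZl mul0r. Qed.
Lemma tr11 (N : 'M[R]_1) : N 0 0 = N^T 0 0.
Proof. by rewrite mxE. Qed.
Lemma blC M x y : bl M x y = bl M^T y x.
Proof. by rewrite /bl tr11 !trmx_mul !trmxK mulmxA. Qed.
Lemma dotvC x y : dotv x y = dotv y x.
Proof. by rewrite !dot_bl blC trmx1. Qed.

Lemma dotv_sum x : dotv x x = \sum_i x i 0 ^+ 2.
Proof. by rewrite /dotv mxE; apply: eq_bigr => i _; rewrite mxE expr2. Qed.

Lemma dotv_ge0 x : 0 <= dotv x x.
Proof. by rewrite dotv_sum sumr_ge0 // => i _; rewrite sqr_ge0. Qed.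

Lemma dotv_eq0 x : dotv x x = 0 -> x = 0.
Proof.
rewrite dotv_sum => H; apply/matrixP => i j; rewrite ord1 mxE.
have H2 : forall k : 'I_n, true -> x k 0 ^+ 2 = 0.
  by apply: psumr_eq0P => // k _; rewrite sqr_ge0.
by have /eqP := H2 i isT; rewrite sqrf_eq0 => /eqP.
Qed.
End S.

Section Sig.
Variable R : realType.
Variables d n : nat.
Variable s : 'M[R]_(d, n).
Implicit Types (x y z : 'cV[R]_n).

Lemma imT_add x y : imT s x -> imT s y -> imT s (x + y).
Proof. by move=> [a ->] [b ->]; exists (a + b); rewrite mulmxDr. Qed.
Lemma imT_scale a x : imT s x -> imT s (a *: x).
Proof. by move=> [b ->]; exists (a *: b); rewrite scalemxAr. Qed.
Lemma imT_sub x y : imT s x -> imT s y -> imT s (x - y).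
Proof. by move=> hx hy; rewrite -scaleN1r; apply: imT_add => //; apply: imT_scale. Qed.
Lemma kerm_add x y : kerm s x -> kerm s y -> kerm s (x + y).
Proof. by rewrite /kerm /= mulmxDr => -> ->; rewrite addr0. Qed.
Lemma kerm_scale a x : kerm s x -> kerm s (a *: x).
Proof. by rewrite /kerm /= -scalemxAr => ->; rewrite scaler0. Qed.
Lemma kerm_sub x y : kerm s x -> kerm s y -> kerm s (x - y).
Proof. by move=> hx hy; rewrite -scaleN1r; apply: kerm_add => //; apply: kerm_scale. Qed.

Lemma perp_VK u k : imT s u -> kerm s k -> dotv u k = 0.
Proof.
move=> [y ->]; rewrite /kerm /= => hk.
by rewrite /dotv trmx_mul trmxK -mulmxA hk mulmx0 mxE.
Qed.

Lemma perpV_ker x : (forall u, imT s u -> dotv u x = 0) -> kerm s x.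
Proof.
move=> H; apply: dotv_eq0.
have := H (s^T *m (s *m x)) (ex_intro _ _ erefl).
by rewrite /dotv trmx_mul trmxK mulmxA.
Qed.

Lemma unit_ssT : \rank s = d -> s *m s^T \in unitmx.
Proof.
move=> hr; rewrite -row_free_unit; apply: inj_row_free => v hv.
have rf : row_free s by rewrite /row_free hr.
apply: (row_free_inj rf); rewrite mul0mx.
have : (v *m s)^T = 0.
  apply: dotv_eq0; rewrite /dotv trmxK trmx_mul mulmxA -(mulmxA v) hv mul0mx mxE //.
by move/(congr1 trmx); rewrite trmxK trmx0.
Qed.

Lemma proj_exists z : \rank s = d -> exists p, imT s p /\ kerm s (z - p).
Proof.
move=> hr; exists (s^T *m (invmx (s *m s^T) *m (s *m z))); split.
  by exists (invmx (s *m s^T) *m (s *m z)).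
rewrite /kerm /= mulmxBr !mulmxA mulmxV ?unit_ssT // mul1mx subrr //.
Qed.

Lemma perpK_imT x : \rank s = d -> (forall k, kerm s k -> dotv k x = 0) -> imT s x.
Proof.
move=> hr H; have [p [hp hk]] := proj_exists x hr.
suff : x - p = 0 by move/eqP; rewrite subr_eq0 => /eqP ->.
apply: dotv_eq0; rewrite !dot_bl blBr -!dot_bl H // dotvC perp_VK // ?subrr //; exact: kerm_sub.
Qed.
End Sig.

Lemma blexp (R : realType) n (M : 'M[R]_n) (x y : 'cV[R]_n) (a : R) :
  bl M (x - a *: y) (x - a *: y) = bl M x x - a * (bl M x y + bl M y x) + a ^+ 2 * bl M y y.
Proof. rewrite !blBl !blBr !blZl !blZr; ring. Qed.

Lemma vec_id1 (R : realType) n (y Z p : 'cV[R]_n) : y - (Z - p) = p - (Z - y).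
Proof. by rewrite !opprB addrCA. Qed.
Lemma vec_id2 (R : realType) n (Z p f : 'cV[R]_n) : Z - f = (Z - p) - (f - p).
Proof. by rewrite opprB addrA subrK. Qed.

Lemma Qpos (R : realType) n (B : 'M[R]_n) (xi w v : 'cV[R]_n) (a h alpha' : R) :
  (forall x, alpha' * dotv x x <= bl B x x) -> 0 < alpha' -> B^T = B ->
  bl B w w = a -> (forall u, bl B w u = dotv xi u) -> a < h ^+ 2 ->
  0 <= h ^+ 2 * bl B v v - (dotv xi v) ^+ 2 /\
  (h ^+ 2 * bl B v v - (dotv xi v) ^+ 2 = 0 -> v = 0).
Proof.
move=> hal ha BT hw hwu hah.
have qge x : 0 <= bl B x x.
  by apply: le_trans (hal x); apply: mulr_ge0; [exact: ltW | exact: dotv_ge0].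
case: (eqVneq v 0) => [->|hv].
  by rewrite bl0l dot_bl blC bl0l mulr0 expr0n /= subrr; split.
have dpos : 0 < dotv v v.
  rewrite lt_def dotv_ge0 andbT; apply/eqP => /dotv_eq0 e; by rewrite e eqxx in hv.
have qpos : 0 < bl B v v by apply: lt_le_trans (hal v); apply: mulr_gt0.
set L := dotv xi v; set qv := bl B v v.
set lam := L / qv.
have hl : lam * qv = L by rewrite /lam divfK // gt_eqF.
have := qge (w - lam *: v); rewrite blexp hw hwu -/L.
have -> : bl B v w = L by rewrite blC BT hwu.
rewrite -/qv => hE.
have hCS : L ^+ 2 <= a * qv.
  rewrite -hl in hE *; have := mulr_ge0 (ltW qpos) hE.
  have -> : qv * (a - lam * (lam * qv + lam * qv) + lam ^+ 2 * qv) = a * qv - (lam * qv) ^+ 2 by ring.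
  lra.
have hQ : (h ^+ 2 - a) * qv <= h ^+ 2 * qv - L ^+ 2 by nra.
have hQp : 0 < (h ^+ 2 - a) * qv by apply: mulr_gt0 => //; rewrite subr_gt0.
split; first by lra.
move=> e; have : (0:R) < 0 by lra.
by rewrite ltxx.
Qed.

Unset Implicit Arguments.
Theorem lemma5p1 (R : realType) (d n : nat) (sigma : 'M[R]_(d, n))
  (A : 'M[R]_n) (h : R) (Z xi : 'cV[R]_n) (alpha' : R) :
  (d < n)%N ->
  \rank sigma = d ->
  sym_posdef A ->
  0 < h ->
  imT sigma xi ->
  0 < alpha' ->
  (forall x : 'cV[R]_n, alpha' * dotv x x <= qform (invmx A) x) ->
  normv xi < h * Num.sqrt alpha' ->
  (fun x => invmx A *m x) @` kerm sigma = kerm sigma ->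
  let F := fun phi : 'cV[R]_n =>
    - dotv xi phi + h * Num.sqrt (qform (invmx A) (Z - phi)) in
  let phibar := Pi sigma Z +
    (Num.sqrt (qform (invmx A) (Piperp sigma Z))
       * (Num.sqrt (h ^+ 2 - qform A xi))^-1) *: (A *m xi) in
  [/\ imT sigma phibar,
      (forall phi, imT sigma phi -> F phibar <= F phi)
    & (forall psi, imT sigma psi ->
         (forall phi, imT sigma phi -> F psi <= F phi) -> psi = phibar)].
Proof.
move=> _ hr [hAT hApos] hh hxi ha hal hnorm himg.
set B := invmx A in hal himg *. move=> F phibar.
have Au : A \in unitmx.
  rewrite -row_free_unit; apply: inj_row_free => v hv.
  have : v^T = 0.
    case: (eqVneq v^T 0) => // hne; have := hApos _ hne.
    by rewrite /qform trmxK hv mul0mx mxE ltxx.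
  by move/(congr1 trmx); rewrite trmxK trmx0.
have BT : B^T = B by rewrite /B trmx_inv hAT.
have BA : B *m A = 1%:M by rewrite /B mulVmx.
have AB : A *m B = 1%:M by rewrite /B mulmxV.
have BK k : kerm sigma k -> kerm sigma (B *m k) by move=> hk; rewrite -himg; exists k.
have AK k : kerm sigma k -> kerm sigma (A *m k).
  rewrite -{1}himg => -[k' hk' <-]; by rewrite mulmxA AB mul1mx.
have AV u : imT sigma u -> imT sigma (A *m u).
  move=> hu; apply: perpK_imT => // k hk.
  by rewrite -blE blC hAT blE (perp_VK hu) //; apply: AK.
have cross u k : imT sigma u -> kerm sigma k -> bl B u k = 0.
  by move=> hu hk; rewrite blE (perp_VK (s:=sigma)) //; apply: BK.
have bsym x y : bl B x y = bl B y x by rewrite blC BT.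
set pV := Pi sigma Z.
have [pVV pVK] : imT sigma pV /\ kerm sigma (Z - pV).
  have : [set p | imT sigma p /\ forall s, imT sigma s -> dotv s (Z - p) = 0] pV.
    apply: xgetPex; have [p [hp hk]] := proj_exists Z hr.
    by exists p; split => // u hu; apply: (perp_VK (s:=sigma)).
  by move=> [h1 h2]; split => //; apply: perpV_ker.
have pKe : Piperp sigma Z = Z - pV.
  apply: xget_unique; first split => //.
    by move=> k hk; rewrite opprB addrC subrK dotvC (perp_VK (s:=sigma)).
  move=> y [hy1 hy2]; apply/eqP; rewrite -subr_eq0; apply/eqP.
  apply: dotv_eq0; rewrite vec_id1.
  have he : kerm sigma (pV - (Z - y)).
    by rewrite -vec_id1; apply: kerm_sub.
  rewrite dot_bl blBr -!dot_bl hy2 // dotvC (perp_VK (s:=sigma)) // subrr //.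
set zK := Z - pV in pVK pKe *.
set c := bl B zK zK.
set w := A *m xi.
set a := qform A xi.
have hwu u : bl B w u = dotv xi u.
  by rewrite /bl /w trmx_mul hAT -(mulmxA _ A) AB mulmx1 /dotv.
have hw : bl B w w = a.
  by rewrite hwu /dotv /w /a /qform mulmxA.
have haxw : dotv xi w = a by rewrite -hw hwu.
have qge x : 0 <= bl B x x.
  by apply: le_trans (hal x); apply: mulr_ge0; [exact: ltW | exact: dotv_ge0].
have c0 : 0 <= c by apply: qge.
have hdx : dotv xi xi < h ^+ 2 * alpha'.
  move: hnorm; rewrite /normv.
  have := sqr_sqrtr (dotv_ge0 xi); have := sqr_sqrtr (ltW ha).
  have := sqrtr_ge0 (dotv xi xi); have := sqrtr_ge0 alpha'.
  set s1 := Num.sqrt (dotv xi xi); set s2 := Num.sqrt alpha'.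
  move=> h1 h2 h3 h4 h5; rewrite -h3 -h4; nra.
have hah : a < h ^+ 2.
  have := dotv_ge0 (xi - alpha' *: w).
  rewrite dot_bl blexp -!dot_bl (dotvC w xi) haxw.
  have := hal w; rewrite qform_bl hw => h1 h2.
  have := mulr_ge0 (ltW ha) (dotv_ge0 w).
  nra.
have hQ v := Qpos v (fun x => hal x) ha BT hw hwu hah.
have Fform phi : imT sigma phi -> F phi =
    - dotv xi pV - dotv xi (phi - pV) + h * Num.sqrt (c + bl B (phi - pV) (phi - pV)).
  move=> hphi; have hu : imT sigma (phi - pV) by apply: imT_sub.
  rewrite /F; have -> : dotv xi phi = dotv xi pV + dotv xi (phi - pV).
    by rewrite !dot_bl -blDr addrC subrK.
  rewrite qform_bl (vec_id2 Z pV phi) -/zK.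
  move: (phi - pV) hu => u hu.
  have -> : bl B (zK - u) (zK - u) = c + bl B u u.
    have := blexp B zK u 1; rewrite scale1r => ->.
    rewrite bsym (cross _ _ hu pVK) -/c; ring.
  by rewrite opprD.
set t := Num.sqrt c / Num.sqrt (h ^+ 2 - a).
have phE : phibar = pV + t *: w by rewrite /phibar pKe.
have ht0 : 0 <= t by apply: divr_ge0; apply: sqrtr_ge0.
have hha : 0 < h ^+ 2 - a by rewrite subr_gt0.
have hta : t ^+ 2 * (h ^+ 2 - a) = c.
  by rewrite /t expr_div_n !sqr_sqrtr ?(ltW hha) // divfK // gt_eqF.
have hphV : imT sigma phibar by rewrite phE; apply: imT_add => //; apply: imT_scale; apply: AV.
have hup : phibar - pV = t *: w by rewrite phE addrAC subrr add0r.
have Fph : F phibar = - dotv xi pV - t * a + h * (t * h).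
  rewrite Fform // hup.
  have -> : dotv xi (t *: w) = t * a by rewrite dot_bl blZr -dot_bl haxw.
  rewrite blZl blZr hw.
  have -> : c + t * (t * a) = (t * h) ^+ 2.
    by rewrite -hta; ring.
  by rewrite sqrtr_sqr ger0_norm // mulr_ge0 // ltW.
have key phi : imT sigma phi ->
  F phi = - dotv xi pV - dotv xi (phi - pV) + h * Num.sqrt (c + bl B (phi - pV) (phi - pV)) /\
  h ^+ 2 * (c + bl B (phi - pV) (phi - pV)) - (t * (h ^+ 2 - a) + dotv xi (phi - pV)) ^+ 2 =
  h ^+ 2 * bl B (phi - pV - t *: w) (phi - pV - t *: w) - (dotv xi (phi - pV - t *: w)) ^+ 2.
  move=> hphi; split; first exact: Fform.
  move: (phi - pV) => u.
  rewrite blexp (bsym u w) hwu hw (dot_bl xi (u - t *: w)) blBr blZr -!dot_bl haxw -hta; ring.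
have sqle (x y : R) : 0 <= y -> x ^+ 2 <= y ^+ 2 -> x <= y by move=> *; nra.
have part2 phi : imT sigma phi -> F phibar <= F phi.
  move=> hphi; have [e1 e2] := key phi hphi; rewrite Fph e1.
  have [q1 _] := hQ (phi - pV - t *: w).
  have hS := sqr_sqrtr (addr_ge0 c0 (qge (phi - pV))).
  have S0 := sqrtr_ge0 (c + bl B (phi - pV) (phi - pV)).
  move: e2 q1 hS S0; set S := Num.sqrt _; set L := dotv xi (phi - pV).
  move=> e2 q1 hS S0.
  have : t * (h ^+ 2 - a) + L <= h * S.
    apply: sqle; first by apply: mulr_ge0 => //; apply: ltW.
    rewrite exprMn hS; lra.
  have : h * (t * h) = t * (h ^+ 2 - a) + t * a by ring.
  lra.
split => //.
move=> psi hpsi hmin; have h1 := hmin phibar hphV; have h2 := part2 psi hpsi.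
have [e1 e2] := key psi hpsi.
have [_ q2] := hQ (psi - pV - t *: w).
have hS := sqr_sqrtr (addr_ge0 c0 (qge (psi - pV))).
move: h1 h2; rewrite Fph e1 => h1 h2.
have hv : psi - pV - t *: w = 0.
  have hX : h * Num.sqrt (c + bl B (psi - pV) (psi - pV)) = t * (h ^+ 2 - a) + dotv xi (psi - pV).
    have : h * (t * h) = t * (h ^+ 2 - a) + t * a by ring.
    lra.
  apply: q2; rewrite -e2 -hX exprMn hS subrr //.
by rewrite phE; apply/eqP; rewrite -subr_eq0 opprD addrA hv.
Qed.
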